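(* Let $n\geqslant 3$, $X\geqslant 1$ and $\mathbf{y}\in\mathbb{N}^n$ with $1\leqslant y_i\leqslant X$ for all $i$. Then $$N_{\mathbf{y}}(X)\ll\frac{X^{n-1}}{\|\mathbf{d}\|_2},$$ where $\|\cdot\|_2$ is the Euclidean norm on $\mathbb{R}^n$ and $\mathbf{d}=(d_1,\dots,d_n)$.
   Context: $N_{\mathbf{y}}(X)=\#\{\mathbf{x}\in\mathbb{Z}^n:\ \max_i|x_i|\leqslant X,\ \sum_{i=1}^n x_i\prod_{j\neq i}y_j=0\}$. Let $N=2^n-1$; for $h\in\{1,\dots,N\}$ write $h=\sum_{j}\varepsilon_j(h)2^{j-1}$ with $\varepsilon_j(h)\in\{0,1\}$; $h\preceq\ell$ means $\varepsilon_j(h)\leqslant\varepsilon_j(\ell)$ for all $j$. Let $(z_h)$ be the unique reduced $N$-tuple of positive integers ($\gcd(z_h,z_\ell)=1$ whenever $h,\ell$ are $\preceq$-incomparable) with $y_j=\prod_h z_h^{\varepsilon_j(h)}$, and $d_i=\prod_h z_h^{1-\varepsilon_i(h)}$. *)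

(* Defs.v *)
From mathcomp Require Import all_boot all_order all_algebra.
From mathcomp Require Import reals.
Set Implicit Arguments. Unset Strict Implicit. Unset Printing Implicit Defensive.
Import Order.TTheory GRing.Theory Num.Theory.

(* Indices h range over {1, ..., 2^n - 1}; coordinates j over 'I_n
   (j : 'I_n stands for the paper's index j+1).  *)

Definition eps (n : nat) (j : 'I_n) (h : nat) : nat := odd (h %/ 2 ^ j).

Definition preceq (n : nat) (h l : nat) : bool :=
  [forall j : 'I_n, eps j h <= eps j l].

(* z : nat -> nat, only the values at h in [1, 2^n - 1] matter *)
Definition is_reduced_tuple (n : nat) (z : nat -> nat) : Prop :=
  (forall h, 1 <= h <= 2 ^ n - 1 -> 0 < z h) /\
  (forall h l, 1 <= h <= 2 ^ n - 1 -> 1 <= l <= 2 ^ n - 1 ->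
     ~~ preceq n h l -> ~~ preceq n l h -> coprime (z h) (z l)).

Definition y_of (n : nat) (z : nat -> nat) (j : 'I_n) : nat :=
  \prod_(1 <= h < 2 ^ n) z h ^ eps j h.

Definition d_of (n : nat) (z : nat -> nat) (i : 'I_n) : nat :=
  \prod_(1 <= h < 2 ^ n) z h ^ (1 - eps i h).

Local Open Scope ring_scope.
Definition linform (n : nat) (y : 'I_n -> nat) (x : 'I_n -> int) : int :=
  \sum_(i < n) x i * ((\prod_(j < n | j != i) y j)%N)%:Z.

(* Every such x has |x_i| <= K := truncn X, so x is encoded by
   c : {ffun 'I_n -> 'I_(2K+1)} via x_i = c_i - K (a bijection onto
   the box [-K, K]^n); the constraint |x_i| <= X is also imposed explicitly. *)
Definition N_y (R : realType) (n : nat) (y : 'I_n -> nat) (X : R) : nat :=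
  let K := Num.truncn X in
  #|[set c : {ffun 'I_n -> 'I_(K.*2.+1)} |
      let x := fun i => (val (c i))%:Z - K%:Z in
      [forall i, (`|x i|%:~R <= X)] && (linform y x == 0)]|.

Definition norm2 (R : realType) (n : nat) (v : 'I_n -> nat) : R :=
  Num.sqrt (\sum_(i < n) ((v i)%:R) ^+ 2).

(* Main.v *)
Require Import Defs.
From mathcomp Require Import all_boot all_order all_algebra.
From mathcomp Require Import reals.
From mathcomp Require Import zify.
Import Order.TTheory GRing.Theory Num.Theory.
Set Implicit Arguments. Unset Strict Implicit. Unset Printing Implicit Defensive.

Lemma bits0 n h : (h < 2 ^ n)%N -> (forall j, (j < n)%N -> ~~ odd (h %/ 2 ^ j)) -> h = 0%N.
Proof.
elim: n h => [|n IH] h hlt hb; first by move: hlt; rewrite expn0 ltnS leqn0 => /eqP.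
have h0 : ~~ odd h by have := hb 0%N isT; rewrite expn0 divn1.
have h2 : h./2 = 0%N.
  apply: IH => [|j hj].
    by move: hlt; rewrite expnS -divn2; rewrite ltn_divLR // mulnC.
  by have := hb j.+1 hj; rewrite expnS -divn2 -divnMA mulnC.
by rewrite -[h]odd_double_half h2 (negbTE h0).
Qed.

Lemma pop_gt0 n h : (1 <= h < 2 ^ n)%N -> (0 < \sum_(j < n) eps j h)%N.
Proof.
case/andP=> h1 h2; rewrite lt0n; apply/negP => /eqP hs.
have : h = 0%N.
  apply: (bits0 h2) => j hj.
  move: hs; rewrite (bigD1 (Ordinal hj)) //= => /eqP; rewrite addn_eq0 /eps /=.
  by case: (odd _).
lia.
Qed.


Lemma prod_exp_dvd (r : seq nat) (z a b : nat -> nat) :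
  (forall h, h \in r -> a h <= b h)%N ->
  (\prod_(h <- r) z h ^ a h %| \prod_(h <- r) z h ^ b h)%N.
Proof.
move=> hab.
rewrite [X in _ %| X](eq_big_seq (fun h => z h ^ a h * z h ^ (b h - a h))%N); last first.
  move=> h hr; rewrite -expnD (subnKC (hab h hr)) //=.
by rewrite big_split /= dvdn_mulr.
Qed.

Lemma prod_exp_gt0 (r : seq nat) (z e : nat -> nat) :
  (forall h, h \in r -> 0 < z h)%N -> (0 < \prod_(h <- r) z h ^ e h)%N.
Proof.
move=> hz; rewrite big_seq; apply: (big_ind (fun x => 0 < x)%N) => // [x y hx hy|h hr].
  by rewrite muln_gt0 hx hy.
by rewrite expn_gt0 hz.
Qed.

Definition Gof n (z : nat -> nat) : nat :=
  \prod_(1 <= h < 2 ^ n) z h ^ (\sum_(j < n) eps j h - 1).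

Lemma prod_y n (z : nat -> nat) (i : 'I_n) :
  (\prod_(j < n | j != i) y_of z j = Gof n z * d_of z i)%N.
Proof.
rewrite /y_of /Gof /d_of.
rewrite (exchange_big_dep xpredT) //=.
rewrite -big_split /=.
rewrite !big_seq; apply: eq_bigr => h; rewrite mem_index_iota => hh.
rewrite -expnD -expn_sum; congr (_ ^ _).
have hp := pop_gt0 hh.
rewrite (bigD1 i) //= in hp *.
have : (eps i h <= 1)%N by rewrite /eps; case: (odd _).
have -> : (\sum_(i0 < n | (i0 != i) && true) eps i0 h = \sum_(i0 < n | i0 != i) eps i0 h)%N.
  by apply: eq_bigl => j; rewrite andbT.
move: hp; set S := \sum_(i0 < n | i0 != i) eps i0 h; set e := eps i h.
clearbody S e; lia.
Qed.

Lemma bez_seq (I : eqType) (P : pred I) (d : I -> nat) m (r : seq I) :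
  (0 < m)%N -> uniq r -> exists a : I -> nat,
  (\sum_(i <- r | P i) a i * d i = gcdn m (\big[gcdn/0%N]_(i <- r | P i) d i) %[mod m])%N.
Proof.
move=> m0; elim: r => [|x r IH] /=.
  by move=> _; exists (fun=> 0%N); rewrite !big_nil gcdn0 modnn mod0n.
case/andP=> xr ur; have [a ha] := IH ur.
rewrite big_cons; case hPx: (P x) => /=; last first.
  by exists a; rewrite big_cons hPx.
set G := \big[gcdn/0%N]_(i <- r | P i) d i.
set S := \sum_(i <- r | P i) a i * d i in ha.
have -> : gcdn m (gcdn (d x) G) = gcdn (d x) (gcdn m G).
  by rewrite gcdnA (gcdnC m) -gcdnA.
set g := gcdn m G.
have g0 : (0 < g)%N by rewrite gcdn_gt0 m0.
have [e he] : exists e, m = (e * g)%N by exists (m %/ g); rewrite divnK ?dvdn_gcdl.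
have e1 : (1 <= e)%N by move: m0; rewrite he; case: e {he}.
have [dx0|dxp] := posnP (d x).
  by exists a; rewrite big_cons hPx dx0 gcd0n muln0 add0n.
case: (egcdnP g dxp) => km kn hk _.
exists (fun i => if i == x then km else kn * (e - 1) * a i)%N.
rewrite big_cons hPx eqxx.
have -> : (\sum_(i <- r | P i) (if i == x then km else kn * (e - 1) * a i) * d i
   = kn * (e - 1) * S)%N.
  rewrite /S big_distrr /= big_seq_cond [in RHS]big_seq_cond; apply: eq_bigr => i /andP[ir _].
  have -> : (i == x) = false by apply/eqP => ix; move: xr; rewrite -ix ir.
  by rewrite mulnA.
rewrite -modnDmr -modnMmr ha modnMmr modnDmr.
set T := gcdn (d x) g.
have -> : (km * d x + kn * (e - 1) * g = T + kn * m)%N.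
  have E : (kn * (e * g) = kn * g + kn * (e - 1) * g)%N.
    by rewrite -{1}(subnK e1) mulnDl mul1n mulnDr mulnA addnC.
  rewrite he hk E -/T.
  by rewrite [in RHS]addnCA addnA.
by rewrite addnC modnMDl.
Qed.


Lemma eps_le1 n (j : 'I_n) h : (eps j h <= 1)%N.
Proof. by rewrite /eps; case: (odd _). Qed.

Lemma prime_dvd_d n (z : nat -> nat) (i : 'I_n) p : prime p -> (p %| d_of z i)%N ->
  exists h, [/\ (1 <= h < 2 ^ n)%N, eps i h = 0%N & (p %| z h)%N].
Proof.
move=> pp; rewrite /d_of (Euclid_dvd_prod _ _ _ pp) big_has.
case/hasP => h; rewrite mem_index_iota => hh.
rewrite Euclid_dvdX // => /andP[hz he]; exists h; split => //.
have := eps_le1 i h; lia.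
Qed.

Lemma sum_eq_pointwise n (a b : 'I_n -> nat) :
  (forall j, a j <= b j)%N -> (\sum_j b j <= \sum_j a j)%N -> forall j, a j = b j.
Proof.
move=> hab hs j; apply/eqP; rewrite eqn_leq hab /=; rewrite leqNgt; apply/negP => hlt.
have : (\sum_j a j < \sum_j b j)%N.
  rewrite (bigD1 j) //= [X in (_ < X)%N](bigD1 j) //=.
  by rewrite -addSn leq_add // leq_sum.
by rewrite ltnNge hs.
Qed.

Lemma gcd_d_one n (z : nat -> nat) (k : 'I_n) : is_reduced_tuple n z ->
  gcdn (d_of z k) (\big[gcdn/0%N]_(j | j != k) d_of z j) = 1%N.
Proof.
case=> zpos zcop.
have dk0 : (0 < d_of z k)%N.
  apply: prod_exp_gt0 => h; rewrite mem_index_iota => hh; apply: zpos; lia.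
set g := gcdn _ _.
have g0 : (0 < g)%N by rewrite gcdn_gt0 dk0.
apply/eqP; rewrite eqn_leq g0 andbT leqNgt; apply/negP => g1.
set p := pdiv g.
have pp : prime p by exact: pdiv_prime.
have pg : (p %| g)%N by exact: pdiv_dvd.
have pd : forall i : 'I_n, (p %| d_of z i)%N.
  move=> i; case: (eqVneq i k) => [->|ik].
    by apply: dvdn_trans pg _; rewrite dvdn_gcdl.
  apply: dvdn_trans pg _; apply: dvdn_trans (dvdn_gcdr _ _) _.
  by move/dvdn_biggcdP: (dvdnn (\big[gcdn/0%N]_(j | j != k) d_of z j)) => /(_ i ik).
pose W := [pred h : 'I_(2 ^ n) | (0 < h)%N && (p %| z h)%N].
pose pop (h : nat) := (\sum_(j < n) eps j h)%N.
have [h0 [h0r _ h0p]] := prime_dvd_d pp (pd k).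
have h0lt : (h0 < 2 ^ n)%N by lia.
have W0 : W (Ordinal h0lt) by rewrite /W /= h0p andbT; lia.
case: (arg_minnP (fun h : 'I_(2 ^ n) => pop h) W0) => hs /andP[hs0 hsp] hsmin.
have comp : forall h : 'I_(2 ^ n), W h -> preceq n hs h || preceq n h hs.
  move=> h /andP[h0' hp]; apply/negPn/negP => /norP[c1 c2].
  have hc := zcop hs h.
  have : coprime (z hs) (z h).
    by apply: hc => //; have := ltn_ord hs; have := ltn_ord h; lia.
  rewrite /coprime => /eqP hg.
  have : (p %| gcdn (z hs) (z h))%N by rewrite dvdn_gcd hsp hp.
  by rewrite hg Euclid_dvd1.
have allz : forall j : 'I_n, eps j hs = 0%N.
  move=> j; have [hj [hjr hje hjp]] := prime_dvd_d pp (pd j).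
  have hjlt : (hj < 2 ^ n)%N by lia.
  have Wj : W (Ordinal hjlt) by rewrite /W /= hjp andbT; lia.
  case/orP: (comp _ Wj) => /forallP hpre.
    by have := hpre j; rewrite /= hje; lia.
  have hm := hsmin _ Wj.
  have := sum_eq_pointwise (a := fun j => eps j hj) (b := fun j => eps j hs) hpre hm j.
  by rewrite /= hje.
have : val hs = 0%N.
  apply: (bits0 (ltn_ord hs)) => j hj.
  by have := allz (Ordinal hj); rewrite /eps /=; case: (odd _).
by move=> e; move: hs0; rewrite -[nat_of_ord hs]/(val hs) e.
Qed.


Lemma count_main n K (d : 'I_n -> nat) (k : 'I_n) (t : nat -> 'I_n -> nat) :
  (0 < d k)%N ->
  (forall c j, t c j <= K)%N ->
  (forall c, c < d k -> \sum_(j | j != k) t c j * d j = c %[mod d k])%N ->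
  (d k * #|[set f : {ffun 'I_n -> 'I_(K.*2.+1)} |
       \sum_i f i * d i == K * \sum_i d i]| <= (K * 3).+1 ^ n.-1)%N.
Proof.
move=> dk0 tK tmod.
set S := [set f : {ffun 'I_n -> 'I_(K.*2.+1)} | _].
pose Phi (p : 'I_(d k) * {ffun 'I_n -> 'I_(K.*2.+1)}) : {ffun 'I_n -> 'I_(K * 3).+1} :=
  [ffun j => if j == k then ord0 else inord (p.2 j + t p.1 j)].
have bnd : forall (f : {ffun 'I_n -> 'I_(K.*2.+1)}) c j, (f j + t c j < (K * 3).+1)%N.
  move=> f c j; have := ltn_ord (f j); have := tK c j; lia.
have Tsplit : forall (f : {ffun 'I_n -> 'I_(K.*2.+1)}) (c : 'I_(d k)), f \in S ->
   (f k * d k + \sum_(j | j != k) (f j + t c j) * d j = K * \sum_i d i + \sum_(j | j != k) t c j * d j)%N.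
  move=> f c; rewrite inE => /eqP hf.
  rewrite -hf [in RHS](bigD1 k) //= -addnA; congr (_ + _)%N.
  by rewrite -big_split /=; apply: eq_bigr => j _; rewrite mulnDl.
have inj : {in setX [set: 'I_(d k)] S &, injective Phi}.
  case=> c f [c' f']; rewrite !in_setX /= => /andP[_ fS] /andP[_ f'S] /ffunP E.
  have Ej : forall j, j != k -> (f j + t c j = f' j + t c' j)%N.
    move=> j jk; have := E j; rewrite !ffunE (negbTE jk) => /(congr1 val).
    by rewrite /= !inordK ?bnd.
  have L : (\sum_(j | j != k) (f j + t c j) * d j = \sum_(j | j != k) (f' j + t c' j) * d j)%N.
    by apply: eq_bigr => j jk; rewrite Ej.
  have e1 := Tsplit f c fS; have e2 := Tsplit f' c' f'S.
  have cc : c = c'.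
    apply: val_inj => /=.
    have m1 := congr1 (modn^~ (d k)) e1; have m2 := congr1 (modn^~ (d k)) e2.
    move: m1 m2; rewrite /= !modnMDl -[in RHS]modnDmr tmod // modnDmr => m1.
    rewrite -[in RHS]modnDmr tmod // modnDmr -L m1 => /eqP; rewrite eqn_modDl.
    by rewrite !modn_small // => /eqP.
  subst c'.
  have fk : f k = f' k.
    apply: val_inj; apply/eqP; rewrite -(eqn_pmul2r dk0); apply/eqP.
    by apply: (@addIn (\sum_(j | j != k) (f j + t c j) * d j)); rewrite e1 L e2.
  congr (_, _); apply/ffunP => j; case: (eqVneq j k) => [->//|jk].
  by apply: val_inj; apply: (@addIn (t c j)); apply: Ej.
have sub : Phi @: setX [set: 'I_(d k)] S \subset pffun_on ord0 [pred j | j != k] predT.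
  apply/subsetP => g /imsetP [p _ ->]; apply/pffun_onP; split => //.
  apply/subsetP => j; rewrite !inE ffunE; case: (eqVneq j k) => //= ->.
have cD : #|[pred j : 'I_n | j != k]| = n.-1.
  have := cardC1 k; rewrite card_ord => <-; apply: eq_card => j; by rewrite !inE.
have := subset_leq_card sub; rewrite card_pffun_on card_in_imset // cardsX cardsT !card_ord.
by rewrite cD.
Qed.


Lemma nat_main n (z : nat -> nat) (K : nat) (k : 'I_n) :
  is_reduced_tuple n z ->
  (forall j : 'I_n, y_of z j <= K)%N ->
  (d_of z k * #|[set f : {ffun 'I_n -> 'I_(K.*2.+1)} |
       \sum_(i < n) f i * d_of z i == K * \sum_(i < n) d_of z i]| <= (K * 3).+1 ^ n.-1)%N.
Proof.
move=> zr yK; have [zpos _] := zr.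
have zp : forall h, h \in index_iota 1 (2 ^ n) -> (0 < z h)%N.
  by move=> h; rewrite mem_index_iota => hh; apply: zpos; lia.
set d := d_of z.
have dk0 : (0 < d k)%N by apply: prod_exp_gt0.
pose Q (j : 'I_n) := (\prod_(1 <= h < 2 ^ n) z h ^ ((1 - eps k h) * eps j h))%N.
have Q0 : forall j, (0 < Q j)%N by move=> j; apply: prod_exp_gt0.
have QK : forall j, (Q j <= K)%N.
  move=> j; apply: leq_trans (yK j); apply: dvdn_leq; first exact: prod_exp_gt0.
  apply: prod_exp_dvd => h _; have := eps_le1 k h; have := eps_le1 j h; nia.
have dQ : forall j, (d k %| Q j * d j)%N.
  move=> j; rewrite /Q /d /d_of -big_split /=.
  rewrite [X in (_ %| X)%N](eq_bigr (fun h => z h ^ ((1 - eps k h) * eps j h + (1 - eps j h))))%N;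
    last by move=> h _; rewrite expnD.
  apply: prod_exp_dvd => h _; have := eps_le1 k h; have := eps_le1 j h; nia.
have [a ha] := @bez_seq _ (fun j : 'I_n => j != k) d (d k) _ dk0 (index_enum_uniq 'I_n).
rewrite -/d in ha; rewrite gcd_d_one // in ha.
pose t (c : nat) (j : 'I_n) := ((c * a j) %% Q j)%N.
apply: (@count_main n K d k t dk0).
  by move=> c j; apply: leq_trans (QK j); apply: ltnW; rewrite ltn_mod Q0.
move=> c ck.
rewrite -modn_summ.
have -> : (\sum_(j | j != k) (t c j * d j %% d k) = \sum_(j | j != k) (c * a j * d j %% d k))%N.
  apply: eq_bigr => j _; rewrite /t.
  have [w hw] : exists w, (Q j * d j = w * d k)%N by exists (Q j * d j %/ d k)%N; rewrite divnK.
  rewrite {2}(divn_eq (c * a j) (Q j)) mulnDl -mulnA hw mulnA modnMDl //.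
rewrite modn_summ.
have -> : (\sum_(j | j != k) c * a j * d j = c * \sum_(j | j != k) a j * d j)%N.
  by rewrite big_distrr /=; apply: eq_bigr => j _; rewrite mulnA.
by rewrite -modnMmr ha modnMmr muln1.
Qed.


Unset Implicit Arguments.
Local Open Scope ring_scope.

Theorem mainTheorem5 (R : realType) (n : nat) (hn : (3 <= n)%N) :
  exists C : R, 0 < C /\
    forall (X : R) (y : 'I_n -> nat) (z : nat -> nat),
      1 <= X ->
      (forall i, (1 <= y i)%N /\ (y i)%:R <= X) ->
      is_reduced_tuple n z ->
      (forall j, y j = y_of (n:=n) z j) ->
      (N_y y X)%:R <= C * X ^+ (n - 1) / @norm2 R n (d_of (n:=n) z).
Proof.
exists ((4 ^ (n - 1) * n)%N%:R); split.
  by rewrite ltr0n muln_gt0 expn_gt0 /=; apply: leq_trans hn.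
move=> X y z X1 hy zr hyz.
have X0 : 0 <= X by apply: le_trans X1.
set K := Num.truncn X.
have K1 : (1 <= K)%N by rewrite truncn_gt0.
have KX : K%:R <= X by rewrite truncn_le.
have yK : forall j : 'I_n, (y_of z j <= K)%N.
  by move=> j; rewrite -hyz truncn_ge_nat //; exact: (hy j).2.
have n0 : (0 < n)%N by apply: leq_trans hn.
case: (@arg_maxnP 'I_n (Ordinal n0) xpredT (d_of z) isT) => k _ kmax.
set d := d_of z.
set S := [set f : {ffun 'I_n -> 'I_(K.*2.+1)} |
       \sum_(i < n) f i * d_of z i == K * \sum_(i < n) d_of z i]%N.
have hmain := nat_main (K:=K) k zr yK.
have dpos : forall i, (0 < d i)%N.
  move=> i; apply: prod_exp_gt0 => h; rewrite mem_index_iota => hh.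
  case: zr => zpos _; apply: zpos; apply/andP; split; first by case/andP: hh.
  by rewrite -ltnS subn1 prednK ?expn_gt0 //; case/andP: hh.
have G0 : (0 < Gof n z)%N.
  apply: prod_exp_gt0 => h; rewrite mem_index_iota => hh.
  case: zr => zpos _; apply: zpos; apply/andP; split; first by case/andP: hh.
  by rewrite -ltnS subn1 prednK ?expn_gt0 //; case/andP: hh.
have hN : (N_y y X <= #|S|)%N.
  apply: subset_leq_card; apply/subsetP => f; rewrite !inE => /andP[_ /eqP hl].
  move: hl; rewrite /linform.
  have E : forall i : 'I_n, (\prod_(j < n | j != i) y j)%N = (Gof n z * d i)%N.
    by move=> i; rewrite -prod_y; apply: eq_bigr => j _; rewrite hyz.
  under eq_bigr => i _ do rewrite E.
  under eq_bigr => i _ do rewrite PoszM mulrCA.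
  rewrite -mulr_sumr => /eqP; rewrite mulf_eq0 (negbTE (lt0r_neq0 _)) ?ltz_nat //=.
  under eq_bigr => i _ do rewrite mulrBl.
  rewrite sumrB subr_eq0.
  have cast : forall a b : 'I_n -> nat,
      (\sum_(i < n) (a i)%:Z * (b i)%:Z = ((\sum_(i < n) a i * b i)%N)%:Z).
    by move=> a b; rewrite -natz natr_sum; apply: eq_bigr => i _; rewrite natz PoszM.
  rewrite (cast (fun i => val (f i)) d) (cast (fun _ => K) d).
  by rewrite eqz_nat big_distrr.
set N := N_y y X.
set M := d k.
have M0 : (0 < M)%N by apply: dpos.
have NM : (N * M <= (K * 3).+1 ^ (n - 1))%N.
  rewrite subn1; apply: leq_trans hmain; rewrite mulnC leq_mul2l hN orbT //.
have sq : (\sum_(i < n) d i ^ 2 <= (n * M) ^ 2)%N.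
  apply: (@leq_trans (\sum_(i < n) M ^ 2)%N).
    by apply: leq_sum => i _; rewrite leq_exp2r //; exact: kmax.
  rewrite sum_nat_const card_ord expnMn leq_mul2r; apply/orP; right.
  by rewrite -{1}(expn1 n) leq_pexp2l // ltnW.
have sq0 : (0 < \sum_(i < n) d i ^ 2)%N.
  by rewrite (bigD1 k) //= ltn_addr // expn_gt0 M0.
have nsum : \sum_(i < n) ((d i)%:R : R) ^+ 2 = ((\sum_(i < n) d i ^ 2)%N)%:R.
  by rewrite natr_sum; apply: eq_bigr => i _; rewrite natrX.
have nm_gt : 0 < norm2 R d by rewrite /norm2 nsum sqrtr_gt0 ltr0n.
have nm_le : norm2 R d <= (n * M)%N%:R.
  rewrite /norm2 nsum -[X in _ <= X](@ger0_norm _ ((n * M)%N%:R)) // -sqrtr_sqr.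
  by rewrite ler_sqrt ?exprn_ge0 // -natrX ler_nat.
rewrite ler_pdivlMr //.
apply: (@le_trans _ _ (N%:R * (n * M)%N%:R)).
  by rewrite ler_wpM2l.
rewrite natrM mulrCA -natrM.
have h1 : ((N * M)%N%:R : R) <= (4%:R * X) ^+ (n - 1).
  apply: le_trans (_ : ((K * 3).+1 ^ (n - 1))%N%:R <= _); first by rewrite ler_nat.
  rewrite natrX; apply: lerXn2r; rewrite ?nnegrE ?mulr_ge0 //.
  apply: le_trans (_ : (4 * K)%N%:R <= _).
    by rewrite ler_nat; lia.
  by rewrite natrM ler_wpM2l.
rewrite [(4 ^ (n - 1) * n)%N%:R]natrM [(4 ^ (n - 1))%N%:R * _]mulrC -mulrA.
apply: ler_wpM2l => //.
by rewrite natrX -exprMn.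
Qed.
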